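(* Let $G$ be a locally finite discrete group and $1<p<\infty$, and suppose the set $B_1=\{f\in\ell^1(G):\|f\|_{A_p(G)}\le 1\}$ is bounded in the $\ell^1$-norm. Then $G$ is finite.
   Context: A group is locally finite if every finitely generated subgroup is finite. For a discrete group $G$ and $1<p<\infty$, $\frac1p+\frac1q=1$, $A_p(G)$ is the space of functions $u=\sum_{i=1}^\infty g_i*f_i^{\vee}$ with $f_i\in \ell_p(G)$, $g_i\in \ell_q(G)$, $\sum_i\|f_i\|_p\|g_i\|_q<\infty$, where $f^{\vee}(x)=f(x^{-1})$, normed by $\|u\|_{A_p(G)}=\inf\{\sum_i\|f_i\|_p\|g_i\|_q\}$ over all such representations; $\ell^1(G)\subseteq A_p(G)$. *)

(* Defs.v *)
From HB Require Import structures.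
From mathcomp Require Import all_boot all_order all_algebra.
From mathcomp Require Import all_classical all_reals.
From mathcomp Require Import exp.
From mathcomp Require Import complex.
From Stdlib Require Import List.
Set Implicit Arguments. Unset Strict Implicit. Unset Printing Implicit Defensive.
Import Order.TTheory GRing.Theory Num.Theory.
Local Open Scope ring_scope.
Local Open Scope classical_set_scope.

Definition is_group (G : Type) (mul : G -> G -> G) (one : G) (inv : G -> G) : Prop :=
  [/\ (forall x y z, mul x (mul y z) = mul (mul x y) z),
      (forall x, mul one x = x), (forall x, mul x one = x),
      (forall x, mul (inv x) x = one) & (forall x, mul x (inv x) = one)].

Inductive gen_subgroup (G : Type) (mul : G -> G -> G) (one : G) (inv : G -> G)
    (s : list G) : G -> Prop :=
  | gen_base x : List.In x s -> gen_subgroup mul one inv s x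
  | gen_one : gen_subgroup mul one inv s one
  | gen_mul x y : gen_subgroup mul one inv s x -> gen_subgroup mul one inv s y ->
                  gen_subgroup mul one inv s (mul x y)
  | gen_inv x : gen_subgroup mul one inv s x -> gen_subgroup mul one inv s (inv x).

Definition finite_pred (G : Type) (P : G -> Prop) : Prop :=
  exists l : list G, forall x, P x -> List.In x l.

Definition locally_finite (G : Type) (mul : G -> G -> G) (one : G) (inv : G -> G) : Prop :=
  forall s : list G, finite_pred (gen_subgroup mul one inv s).

Section Sums.
Variable R : realType.
Local Notation C := R[i].

Definition fin_psums (T : Type) (a : T -> R) : set R :=
  [set s | exists F : list T, List.NoDup F /\ s = \sum_(x <- F) a x].

Definition summable (T : Type) (a : T -> R) : Prop := has_ubound (fin_psums a).
Definition psum (T : Type) (a : T -> R) : R := sup (fin_psums a).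

(* Unconditional sum of a complex family over an arbitrary index type. *)
Definition has_sumC (T : Type) (a : T -> C) (s : C) : Prop :=
  forall e : R, 0 < e -> exists F0 : list T, forall F : list T, List.NoDup F ->
    (forall x, List.In x F0 -> List.In x F) ->
    Normc.normc (\sum_(x <- F) a x - s) < e.

Definition series_toC (c : nat -> C) (s : C) : Prop :=
  forall e : R, 0 < e -> exists N : nat, forall n : nat, (N <= n)%N ->
    Normc.normc (\sum_(i < n) c i - s) < e.

Definition in_lp (G : Type) (p : R) (f : G -> C) : Prop :=
  summable (fun x => Normc.normc (f x) `^ p).
Definition lp_norm (G : Type) (p : R) (f : G -> C) : R :=
  (psum (fun x => Normc.normc (f x) `^ p)) `^ p^-1.

Definition in_l1 (G : Type) (f : G -> C) : Prop := summable (fun x => Normc.normc (f x)).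
Definition l1_norm (G : Type) (f : G -> C) : R := psum (fun x => Normc.normc (f x)).

Definition conj_exp (p : R) : R := p / (p - 1).

Definition check (G : Type) (inv : G -> G) (f : G -> C) : G -> C := fun x => f (inv x).

Definition conv_at (G : Type) (mul : G -> G -> G) (inv : G -> G)
    (a b : G -> C) (x : G) (v : C) : Prop :=
  has_sumC (fun y => a y * b (mul (inv y) x)) v.

Definition Ap_rep (G : Type) (mul : G -> G -> G) (inv : G -> G) (p : R)
    (u : G -> C) (f g : nat -> G -> C) : Prop :=
  [/\ (forall i, in_lp p (f i)), (forall i, in_lp (conj_exp p) (g i)),
      summable (fun i => lp_norm p (f i) * lp_norm (conj_exp p) (g i)) &
      exists c : nat -> G -> C,
        (forall i x, conv_at mul inv (g i) (check inv (f i)) x (c i x)) /\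
        (forall x, series_toC (fun i => c i x) (u x))].

Definition Ap_norm (G : Type) (mul : G -> G -> G) (inv : G -> G) (p : R)
    (u : G -> C) : R :=
  inf [set r : R | exists f g : nat -> G -> C, Ap_rep mul inv p u f g /\
        r = psum (fun i => lp_norm p (f i) * lp_norm (conj_exp p) (g i))].

End Sums.

(* Main.v *)
Require Import Defs.
From HB Require Import structures.
From mathcomp Require Import all_boot all_order all_algebra.
From mathcomp Require Import all_classical all_reals.
From mathcomp Require Import exp.
From mathcomp Require Import complex.
From Stdlib Require Import List Permutation Classical.
Import Order.TTheory GRing.Theory Num.Theory.
Local Open Scope ring_scope.
Set Implicit Arguments. Unset Strict Implicit.

Section ListSums.
Variable (V : nmodType) (T : Type).

Lemma sum_perm (a : T -> V) (F F' : list T) : Permutation F F' ->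
  \sum_(x <- F) a x = \sum_(x <- F') a x.
Proof.
elim => [|x l l' _ IH|x y l|l l' l'' _ IH1 _ IH2]; rewrite ?big_cons ?IH //.
  by rewrite addrCA.
by rewrite IH1.
Qed.

Lemma sum_filter (a : T -> V) (P : T -> bool) (F : list T) :
  \sum_(x <- F) a x = \sum_(x <- List.filter P F) a x
     + \sum_(x <- List.filter (fun x => ~~ P x) F) a x.
Proof.
elim: F => [|x F IH] /=; first by rewrite !big_nil addr0.
case: (P x) => /=; rewrite !big_cons IH; first by rewrite addrA.
by rewrite addrCA.
Qed.

Lemma sum_zero (a : T -> V) (F : list T) : (forall x, List.In x F -> a x = 0) ->
  \sum_(x <- F) a x = 0.
Proof.
elim: F => [|x F IH] H; first by rewrite big_nil.
by rewrite big_cons H /= ?IH ?add0r //; [move=> y Hy; apply: H; right | left].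
Qed.

Lemma sum_const (a : T -> V) (c : V) (F : list T) :
  (forall x, List.In x F -> a x = c) -> \sum_(x <- F) a x = c *+ length F.
Proof.
elim: F => [|x F IH] H; first by rewrite big_nil.
rewrite big_cons H /= ?IH ?mulrS //; [move=> y Hy; apply: H; right | left]; done.
Qed.

Lemma sum_support (a : T -> V) (F L : list T) : NoDup F -> NoDup L ->
  (forall x, List.In x L -> List.In x F) ->
  (forall x, ~ List.In x L -> a x = 0) ->
  \sum_(x <- F) a x = \sum_(x <- L) a x.
Proof.
move=> nF nL LF az.
rewrite (sum_filter a (fun x => `[< List.In x L >]) F).
rewrite [X in _ + X]sum_zero; last first.
  move=> x /filter_In [_ nx]; apply: az => Lx; move: nx => /= /negP; apply; exact/asboolP.
rewrite addr0; apply: sum_perm; apply: NoDup_Permutation => //.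
  exact: NoDup_filter.
move=> x; rewrite filter_In; split; first by case=> _ /asboolP.
by move=> Hx; split; [exact: LF | exact/asboolP].
Qed.
End ListSums.

Section ListLe.
Variable (R : numDomainType) (T : Type).

Lemma sum_incl_le (a : T -> R) (F L : list T) : NoDup F -> NoDup L ->
  (forall x, List.In x F -> List.In x L) -> (forall x, 0 <= a x) ->
  \sum_(x <- F) a x <= \sum_(x <- L) a x.
Proof.
move=> nF nL FL a0.
rewrite (sum_filter a (fun x => `[< List.In x F >]) L).
have -> : \sum_(x <- F) a x = \sum_(x <- List.filter (fun x => `[< List.In x F >]) L) a x.
  apply: sum_perm; apply: NoDup_Permutation => //; first exact: NoDup_filter.
  move=> x; rewrite filter_In; split; last by case=> _ /asboolP.
  by move=> Hx; split; [exact: FL | exact/asboolP].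
rewrite lerDl; apply: sumr_ge0 => *; exact: a0.
Qed.
End ListLe.

Section Psum.
Variable (R : realType) (T : Type).

Lemma psum_support (a : T -> R) (L : list T) : NoDup L -> (forall x, 0 <= a x) ->
  (forall x, ~ List.In x L -> a x = 0) ->
  summable a /\ psum a = \sum_(x <- L) a x.
Proof.
move=> nL a0 az.
have ub : ubound (fin_psums a) (\sum_(x <- L) a x).
  move=> s [F [nF ->]].
  rewrite (sum_filter a (fun x => `[< List.In x L >]) F).
  rewrite [X in _ + X]sum_zero; last first.
    move=> x /filter_In [_ nx]; apply: az => Lx; move: nx => /= /negP; apply; exact/asboolP.
  rewrite addr0; apply: sum_incl_le => //; first exact: NoDup_filter.
  by move=> x /filter_In [_ /asboolP].
have inS : fin_psums a (\sum_(x <- L) a x) by exists L.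
split; first by exists (\sum_(x <- L) a x).
apply/eqP; rewrite eq_le; apply/andP; split.
  by apply: ge_sup => //; exists (\sum_(x <- L) a x).
apply: sup_upper_bound => //; split; first by exists (\sum_(x <- L) a x).
by exists (\sum_(x <- L) a x).
Qed.

Lemma psum_ge0 (a : T -> R) : summable a -> 0 <= psum a.
Proof.
move=> sa; apply: sup_upper_bound.
  by split => //; exists 0; exists nil; split; [constructor | rewrite big_nil].
by exists nil; split; [constructor | rewrite big_nil].
Qed.
End Psum.

Section Grp.
Variables (G : Type) (mul : G -> G -> G) (one : G) (inv : G -> G).
Hypothesis hG : is_group mul one inv.

Lemma inv_inv z : inv (inv z) = z.
Proof.
case: hG => A l1 r1 lv rv.
by rewrite -[RHS]l1 -(lv (inv z)) -A lv r1.
Qed.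

Lemma sub_shift s y x : gen_subgroup mul one inv s y ->
  (gen_subgroup mul one inv s (inv (mul (inv y) x)) <-> gen_subgroup mul one inv s x).
Proof.
case: hG => A l1 r1 lv rv => Hy; split => Hx.
  have := gen_inv Hx; rewrite inv_inv => H2.
  have := gen_mul Hy H2; by rewrite A rv l1.
by apply: gen_inv; apply: gen_mul => //; apply: gen_inv.
Qed.
End Grp.

Lemma normc_ge0 (R : realType) (x : R[i]) : 0 <= Normc.normc x.
Proof. by case: x => a b /=; exact: sqrtr_ge0. Qed.

Lemma normc_nat (R : realType) (n : nat) : Normc.normc (n%:R : R[i]) = n%:R.
Proof. by rewrite normcMn Normc.normc1. Qed.

Section Main.
Variables (R : realType) (G : Type) (mul : G -> G -> G) (one : G) (inv : G -> G).
Hypothesis hG : is_group mul one inv.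

Lemma lp_zero (r : R) : 0 < r ->
  in_lp r (fun _ : G => (0 : R[i])) /\ lp_norm r (fun _ : G => (0 : R[i])) = 0.
Proof.
move=> r0.
have [sm ps] := @psum_support R G (fun x : G => Normc.normc (0 : R[i]) `^ r) nil (NoDup_nil _)
   (fun x => powR_ge0 _ _) (fun x _ => ltac:(by rewrite Normc.normc0 powR0 // gt_eqF)).
split => //; rewrite /lp_norm ps big_nil powR0 //.
by rewrite invr_eq0 gt_eqF.
Qed.

Lemma big_sub (p : R) (L s : list G) :
  1 < p -> NoDup L -> (forall z, List.In z L <-> gen_subgroup mul one inv s z) ->
  (0 < length L)%N ->
  forall M, (forall f : G -> R[i], in_l1 f -> Ap_norm mul inv p f <= 1 -> l1_norm f <= M) ->
  (length L)%:R <= M.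
Proof.
move=> p1 nL LH n0 M HM.
set n := length L.
pose inL z := `[< List.In z L >].
pose u : G -> R[i] := fun z => if inL z then 1 else 0.
pose g : G -> R[i] := fun z => if inL z then (n%:R)^-1 else 0.
have nR0 : (0 : R) < n%:R by rewrite ltr0n.
have nC0 : (n%:R : R[i]) != 0 by rewrite pnatr_eq0 -lt0n.
have [l1u l1n] : in_l1 u /\ l1_norm u = n%:R.
  have [sm ps] := @psum_support R G (fun x => Normc.normc (u x)) L nL
     (fun x => normc_ge0 _)
     (fun x nx => ltac:(by rewrite /u /inL; case: asboolP => // _; rewrite Normc.normc0)).
  split => //; rewrite /l1_norm ps (@sum_const _ _ _ 1) // => x Lx.
  by rewrite /u /inL; case: asboolP => // _; rewrite Normc.normc1.
rewrite -l1n; apply: HM => //.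
set q := conj_exp p.
have p0 : 0 < p by apply: lt_trans p1.
have q0 : 0 < q by rewrite /q /conj_exp divr_gt0 // subr_gt0.
have [lpu lpun] : in_lp p u /\ lp_norm p u = n%:R `^ p^-1.
  have [sm ps] := @psum_support R G (fun x => Normc.normc (u x) `^ p) L nL
     (fun x => powR_ge0 _ _)
     (fun x nx => ltac:(by rewrite /u /inL; case: asboolP => // _; rewrite Normc.normc0 powR0 // gt_eqF)).
  split => //; rewrite /lp_norm ps (@sum_const _ _ _ 1) // => x Lx.
  by rewrite /u /inL; case: asboolP => // _; rewrite Normc.normc1 powR1.
have [lpg lpgn] : in_lp q g /\ lp_norm q g = n%:R `^ q^-1 * n%:R^-1.
  have [sm ps] := @psum_support R G (fun x => Normc.normc (g x) `^ q) L nL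
     (fun x => powR_ge0 _ _)
     (fun x nx => ltac:(by rewrite /g /inL; case: asboolP => // _; rewrite Normc.normc0 powR0 // gt_eqF)).
  split => //; rewrite /lp_norm ps (@sum_const _ _ _ ((n%:R^-1) `^ q)); last first.
    by move=> x Lx; rewrite /g /inL; case: asboolP => // _; rewrite Normc.normcV normc_nat.
  rewrite -[(_ `^ q) *+ _]mulr_natl powRM ?powR_ge0 // -powRrM mulfV ?gt_eqF // powRr1 //.
  by rewrite invr_ge0 ltW.
have [lpz lpzn] := lp_zero p0.
have [lqz lqzn] := lp_zero q0.
pose fam (i : nat) : G -> R[i] := if i is 0%N then u else (fun _ => 0).
pose gam (i : nat) : G -> R[i] := if i is 0%N then g else (fun _ => 0).
pose c (i : nat) (x : G) : R[i] := if i is 0%N then u x else 0.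
have prod1 : lp_norm p u * lp_norm q g = 1.
  rewrite lpun lpgn mulrA -powRD; last by rewrite pnatr_eq0 -lt0n n0 implybT.
  have -> : p^-1 + q^-1 = 1.
    by rewrite /q /conj_exp invf_div -{1}[p^-1]mul1r -mulrDl addrCA subrr addr0 divff // gt_eqF.
  by rewrite powRr1 ?ler0n // mulfV // gt_eqF.
have nd0 : NoDup [:: 0%N] by constructor; [case | constructor].
have zP : forall i, ~ List.In i [:: 0%N] -> lp_norm p (fam i) * lp_norm q (gam i) = 0.
  case => [|i] ni; first by case: ni; left.
  have -> : fam i.+1 = (fun _ => 0) by [].
  by rewrite lpzn mul0r.
have gP : forall i, 0 <= lp_norm p (fam i) * lp_norm q (gam i).
  move=> i; rewrite /lp_norm; exact: (mulr_ge0 (powR_ge0 _ _) (powR_ge0 _ _)).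
have [smP psP] := psum_support nd0 gP zP.
rewrite big_seq1 in psP.
have psP1 : psum (fun i => lp_norm p (fam i) * lp_norm q (gam i)) = 1 by rewrite psP; exact: prod1.
have lb : has_lbound [set r : R | exists f g : nat -> G -> R[i], Ap_rep mul inv p u f g /\
        r = psum (fun i => lp_norm p (f i) * lp_norm (conj_exp p) (g i))].
  by exists 0 => r [f [h [[_ _ sm _] ->]]]; exact: psum_ge0.
apply: (ge_inf lb); exists fam, gam; split; last by rewrite psP1.
split.
- by case => [|i]; [exact: lpu | exact: lpz].
- by case => [|i]; [exact: lpg | exact: lqz].
- exact: smP.
exists c; split.
  case => [|i] x; rewrite /conv_at /has_sumC => e e0.
    rewrite (_ : gam 0%N = g) // (_ : fam 0%N = u) // (_ : c 0%N x = u x) //.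
    exists L => F nF LF.
    rewrite (sum_support nF nL LF); last first.
      by move=> y ny; rewrite /g /inL; case: asboolP => // _; rewrite mul0r.
    rewrite (@sum_const _ _ _ (n%:R^-1 * u x)); last first.
      move=> y Ly; rewrite /g /check /u /inL; case: asboolP => // _.
      have Hy := (proj1 (LH y) Ly).
      have E : `[< List.In (inv (mul (inv y) x)) L >] = `[< List.In x L >].
        have E2 : gen_subgroup mul one inv s (inv (mul (inv y) x)) <-> gen_subgroup mul one inv s x by apply: sub_shift.
        by apply/asboolP/asboolP => H; apply/LH; [apply/E2 | apply/E2]; exact/LH.
      by rewrite E.
    by rewrite -mulrnAl -mulr_natr mulVf // mul1r subrr Normc.normc0.
  rewrite (_ : gam i.+1 = (fun _ => 0)) // (_ : c i.+1 x = 0) //.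
  exists nil => F nF _.
  rewrite (@sum_zero _ _ _ F); first by rewrite subrr Normc.normc0.
  by move=> y _; rewrite mul0r.
move=> x e e0; exists 1%N; case => [|m] //= _.
by rewrite big_ord_recl big1 ?addr0 ?subrr ?Normc.normc0.
Qed.
End Main.

Theorem corollary3p8 (R : realType) (G : Type) (mul : G -> G -> G) (one : G)
    (inv : G -> G) (p : R) :
  is_group mul one inv -> locally_finite mul one inv -> 1 < p ->
  (exists M : R, forall f : G -> R[i],
      in_l1 f -> Ap_norm mul inv p f <= 1 -> l1_norm f <= M) ->
  exists l : list G, forall x : G, List.In x l.
Proof.
move=> hG lf p1 [M HM].
apply: NNPP => nfin.
have nf : forall l : list G, exists x, ~ List.In x l.
  move=> l; apply: NNPP => H; apply: nfin; exists l => x; apply: NNPP => nx; apply: H; by exists x.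
have mk : forall N : nat, exists s : list G, NoDup s /\ length s = N.
  elim => [|N [s [ns ls]]]; first by exists nil; split; [constructor|].
  have [x nx] := nf s.
  by exists (x :: s); split; [constructor | rewrite /= ls].
set N := (Num.truncn M).+1.
have [s [ns ls]] := mk N.
have [l0 Hl0] := lf s.
have dec : forall x y : G, {x = y} + {x <> y} by move=> x y; exact: pselect.
pose L := List.filter (fun z => `[< gen_subgroup mul one inv s z >]) (List.nodup dec l0).
have nL : NoDup L by apply: NoDup_filter; apply: NoDup_nodup.
have LH : forall z, List.In z L <-> gen_subgroup mul one inv s z.
  move=> z; rewrite filter_In nodup_In; split; first by case=> _ /asboolP.
  by move=> Hz; split; [exact: Hl0 | exact/asboolP].
have sL : (N <= length L)%N.
  rewrite -ls; apply/ssrnat.leP; apply: NoDup_incl_length => // z zs; apply/LH; exact: gen_base.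
have n0 : (0 < length L)%N by apply: leq_trans sL.
have := big_sub hG p1 nL LH n0 HM.
apply/negP; rewrite -ltNge; apply: lt_le_trans (truncnS_gt M) _.
by rewrite ler_nat.
Qed.
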